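(* In the setting below, if a PHB $\mathbf{E}$ is $\Delta^-$-stable but $\Delta^+$-unstable, then every destabilizing subbundle of $\mathbf{E}$ has discrete data $S$.
   Context: Fix distinct $x_1,\dots,x_n\in\mathbb{C}\mathbb{P}^1$. Weights $\beta=(\beta_1(x_i),\beta_2(x_i))_i$ with $0\le\beta_1(x_i)<\beta_2(x_i)<1$ form the weight space $Q$; put $\alpha=\beta_2-\beta_1$ and $\varepsilon_T(\alpha)=\sum_{i\in T}\alpha_i-\sum_{i\notin T}\alpha_i$. Walls are the intersections of $Q$ with the hyperplanes $\varepsilon_T(\beta_2-\beta_1)=0$; chambers are the components of the complement. All PHBs here are rank-2 parabolic Higgs bundles $(E,\Phi)$ over $\mathbb{C}\mathbb{P}^1$ whose underlying holomorphic bundle is trivial, with fixed determinant and trace-free Higgs field: $E$ has a line $E_{x_i,2}\subset E_{x_i}$ at each $x_i$ with weights $\beta_1(x_i)<\beta_2(x_i)$, $\Phi$ is a meromorphic $\mathrm{End}_0(E)\otimes K_{\mathbb{C}\mathbb{P}^1}$-valued section with at most simple poles at the $x_i$ whose residue maps $E_{x_i}$ into $E_{x_i,2}$ and kills $E_{x_i,2}$. A parabolic line subbundle $L$ (necessarily holomorphically trivial) gets weight $\beta_2(x_i)$ at $x_i$ if $L_{x_i}=E_{x_i,2}$ and $\beta_1(x_i)$ otherwise; its discrete data is $S_L=\{i: L_{x_i}=E_{x_i,2}\}$. $(E,\Phi)$ is stable for $\beta$ iff every $\Phi$-invariant line subbundle $L$ satisfies $\varepsilon_{S_L}(\beta_2-\beta_1)<0$.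 Fix a point of $Q$ lying on exactly one wall $W$; a small neighborhood meets two chambers $\Delta^+,\Delta^-$; let $S$ be the index set defining $W$, chosen (replacing $S$ by $S^c$ if needed) so that $\varepsilon_S(\beta_2-\beta_1)>0$ for $\beta\in\Delta^+$. $\Delta^\pm$-stable means stable for weights in $\Delta^\pm$. If $\mathbf{E}$ is $\Delta^-$-stable but $\Delta^+$-unstable, a destabilizing subbundle is a $\Phi$-invariant parabolic line subbundle for which the stability inequality holds in $\Delta^-$ and fails in $\Delta^+$. *)

(* Defs.v *)
From HB Require Import structures.
From mathcomp Require Import all_boot all_order all_algebra.
From mathcomp Require Import all_classical all_reals all_analysis.
From mathcomp Require Import complex.
Set Implicit Arguments. Unset Strict Implicit. Unset Printing Implicit Defensive.
Import Order.TTheory GRing.Theory Num.Theory.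
Import numFieldNormedType.Exports.
Local Open Scope classical_set_scope.
Local Open Scope ring_scope.

(* A weight vector beta: pair of rows (beta_1(x_i))_i, (beta_2(x_i))_i. *)
Definition weight (R : realType) (n : nat) := ('rV[R]_n * 'rV[R]_n)%type.

Definition alpha (R : realType) (n : nat) (b : weight R n) (i : 'I_n) : R :=
  b.2 0 i - b.1 0 i.

Definition epsT (R : realType) (n : nat) (T : {set 'I_n}) (a : 'I_n -> R) : R :=
  \sum_(i in T) a i - \sum_(i in ~: T) a i.

Definition Qspace (R : realType) (n : nat) : set (weight R n) :=
  [set b : weight R n | forall i, 0 <= b.1 0 i /\ b.1 0 i < b.2 0 i /\ b.2 0 i < 1].

Arguments Qspace R n _ : clear implicits.

Definition wall_of (R : realType) (n : nat) (T : {set 'I_n}) : set (weight R n) :=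
  Qspace R n `&` [set b : weight R n | epsT T (alpha b) = 0].

Arguments wall_of R {n} T _.

Definition is_wall (R : realType) (n : nat) (W : set (weight R n)) : Prop :=
  W !=set0 /\ exists T : {set 'I_n}, W = wall_of R T.

Definition walls_union (R : realType) (n : nat) : set (weight R n) :=
  \bigcup_(T in [set: {set 'I_n}]) wall_of R T.

Arguments walls_union R n _ : clear implicits.

Definition chamber_domain (R : realType) (n : nat) : set (weight R n) :=
  Qspace R n `\` walls_union R n.

Arguments chamber_domain R n _ : clear implicits.

Definition is_chamber (R : realType) (n : nat) (D : set (weight R n)) : Prop :=
  exists2 b, chamber_domain R n b & D = connected_component (chamber_domain R n) b.

(* Underlying bundle: trivial C^2 over CP^1, vectors are row vectors
   'rV[C]_2, endomorphisms act on the right (v |-> v *m A).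
   Marked points x_i in CP^1 = C u {oo}: [Some a] is a in C, [None] is oo.
   flag i spans E_{x_i,2}; res i is the residue of Phi at x_i. *)
Record PHB (R : realType) (n : nat) := {
  pts : 'I_n -> option R[i];
  flag : 'I_n -> 'rV[R[i]]_2;
  res : 'I_n -> 'M[R[i]]_2 }.

(* The Higgs field in the affine coordinate z (coefficient of dz):
   Phi(z) = sum over finite marked points x_i of res_i / (z - x_i). *)
Definition Phi_at (R : realType) (n : nat) (E : PHB R n) (z : R[i]) : 'M[R[i]]_2 :=
  \sum_i (match pts E i with Some a => (z - a)^-1 *: res E i | None => 0 end).

(* Well-formedness of the PHB data:
   - the marked points are distinct,
   - each E_{x_i,2} is a line,
   - residue maps E_{x_i} into E_{x_i,2} and kills E_{x_i,2},
   - Phi = sum_i res_i dz/(z - x_i) has no further pole (in particular at oo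
     when oo is not marked, and residue res_i at oo when oo = x_i): this is
     exactly sum_i res_i = 0.  Trace-freeness follows from nilpotency. *)
Definition PHB_wf (R : realType) (n : nat) (E : PHB R n) : Prop :=
  injective (pts E) /\
  (forall i, \rank (flag E i) = 1%N) /\
  (forall i, (res E i <= flag E i)%MS) /\
  (forall i, flag E i *m res E i = 0) /\
  (forall i, \tr (res E i) = 0) /\
  \sum_i res E i = 0.

(* A (holomorphically trivial) line subbundle: a line L in C^2. *)
Definition is_line (R : realType) (L : 'rV[R[i]]_2) : Prop := \rank L = 1%N.

Definition Phi_invariant (R : realType) (n : nat) (E : PHB R n) (L : 'rV[R[i]]_2)
  : Prop :=
  forall z : R[i], (forall i, pts E i <> Some z) -> (L *m Phi_at E z <= L)%MS.

Definition SL (R : realType) (n : nat) (E : PHB R n) (L : 'rV[R[i]]_2)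
  : {set 'I_n} := [set i | (L == flag E i)%MS].

Definition stable (R : realType) (n : nat) (b : weight R n) (E : PHB R n) : Prop :=
  forall L, is_line L -> Phi_invariant E L -> epsT (SL E L) (alpha b) < 0.

Definition chamber_stable (R : realType) (n : nat) (D : set (weight R n))
  (E : PHB R n) : Prop := forall b, D b -> stable b E.

Definition destabilizing (R : realType) (n : nat) (Dm Dp : set (weight R n))
  (E : PHB R n) (L : 'rV[R[i]]_2) : Prop :=
  is_line L /\ Phi_invariant E L /\
  (forall b, Dm b -> epsT (SL E L) (alpha b) < 0) /\
  (forall b, Dp b -> ~ (epsT (SL E L) (alpha b) < 0)).

(* Main.v *)
Require Import Defs.
From HB Require Import structures.
From mathcomp Require Import all_boot all_order all_algebra.
From mathcomp Require Import all_classical all_reals all_analysis.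
From mathcomp Require Import complex.
From mathcomp Require Import lra.
Import Order.TTheory GRing.Theory Num.Theory.
Import numFieldNormedType.Exports.
Local Open Scope classical_set_scope.
Local Open Scope ring_scope.

Lemma epsTE (R : realType) (n : nat) (T : {set 'I_n}) (a : 'I_n -> R) :
  epsT T a = \sum_i (if i \in T then a i else - a i).
Proof.
rewrite /epsT (bigID (fun i => i \in T) _ (fun i => if i \in T then a i else - a i)) /= -sumrN.
congr (_ + _).
  by apply: eq_big => i //; rewrite ?inE // => ->.
apply: eq_big => i; first by rewrite inE.
by rewrite inE => /negbTE ->.
Qed.

Lemma epsT_shift (R : realType) (n : nat) (X : {set 'I_n}) (a d : 'I_n -> R) (k m : 'I_n) :
  k != m -> (forall j, j != k -> j != m -> d j = 0) ->
  epsT X (fun j => a j + d j) = epsT X a + (if k \in X then d k else - d k)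
     + (if m \in X then d m else - d m).
Proof.
move=> km hd; rewrite !epsTE.
have -> : \sum_i (if i \in X then a i + d i else - (a i + d i)) =
   \sum_i (if i \in X then a i else - a i) + \sum_i (if i \in X then d i else - d i).
  rewrite -big_split /=; apply: eq_bigr => i _; case: (i \in X) => //; lra.
rewrite -addrA; congr (_ + _).
rewrite (bigD1 k) //= (bigD1 m) /=; last by rewrite eq_sym.
rewrite big1 ?addr0 ?addrA // => i /andP [ik im].
by rewrite hd //; case: (i \in X); rewrite ?oppr0.
Qed.

Lemma perturb (R : realType) (n : nat) (p : weight R n) (S T : {set 'I_n}) :
  Qspace R n p -> epsT S (alpha p) = 0 -> epsT T (alpha p) = 0 ->
  T != S -> T != ~: S ->
  exists q, Qspace R n q /\ epsT S (alpha q) = 0 /\ epsT T (alpha q) <> 0.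
Proof.
move=> Qp eS eT TS TSc.
have [k hk] : exists k, (k \in T) != (k \in S).
  apply/existsP; rewrite -negb_forall; apply: contra TS => /forallP H.
  by apply/eqP/setP => i; apply/eqP/H.
have [m hm] : exists m, (m \in T) = (m \in S).
  have : exists m, (m \in T) != (m \in ~: S).
    apply/existsP; rewrite -negb_forall; apply: contra TSc => /forallP H.
    by apply/eqP/setP => i; apply/eqP/H.
  case=> m; rewrite inE => h; exists m; move: h.
  by case: (m \in T); case: (m \in S).
have mk : m != k.
  by apply: contraNneq hk => <-; rewrite hm.
have km : k != m by apply: contraNneq hk => ->; rewrite hm.
pose g j := Num.min (p.2 0 j - p.1 0 j) (1 - p.2 0 j).
have gpos : forall j, 0 < g j.
  move=> j; case: (Qp j) => h1 [h2 h3].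
  rewrite /g lt_min; apply/andP; split; lra.
have gle : forall j, g j <= p.2 0 j - p.1 0 j /\ g j <= 1 - p.2 0 j.
  by move=> j; rewrite /g !ge_min !lexx orbT.
pose del := Num.min (g k) (g m) / 2.
have [dk dm] : del < g k /\ del < g m.
  have h1 : Num.min (g k) (g m) <= g k by rewrite ge_min lexx.
  have h2 : Num.min (g k) (g m) <= g m by rewrite ge_min lexx orbT.
  have := gpos k; have := gpos m.
  have : 0 < Num.min (g k) (g m) by rewrite lt_min gpos gpos.
  rewrite /del; split; lra.
have d0 : 0 < del.
  by rewrite /del divr_gt0 // lt_min !gpos.
pose sk : R := if k \in S then 1 else -1.
pose sm : R := if m \in S then 1 else -1.
pose d j := if j == k then del else if j == m then - sk * sm * del else 0.
pose q : weight R n := (p.1, \row_j (p.2 0 j + d j)).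
have aq : alpha q = (fun j => alpha p j + d j).
  apply: funext => j; rewrite /alpha /q /= mxE; lra.
have dz : forall j, j != k -> j != m -> d j = 0.
  by move=> j /negbTE jk /negbTE jm; rewrite /d jk jm.
exists q; split; last split.
- move=> j; rewrite /q /= mxE /d.
  case: eqVneq => [->|jk].
    have [gk1 gk2] := gle k; case: (Qp k) => h1 [h2 h3]; do !split; lra.
  case: eqVneq => [->|jm].
    have [gm1 gm2] := gle m; case: (Qp m) => h1 [h2 h3].
    rewrite /sk /sm; case: (k \in S); case: (m \in S); do !split; lra.
  case: (Qp j) => h1 [h2 h3]; do !split; lra.
- rewrite aq (@epsT_shift _ _ S _ _ _ _ km dz) eS /d eqxx eq_sym (negbTE km) eqxx.
  rewrite /sk /sm; case: (k \in S); case: (m \in S); lra.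
- rewrite aq (@epsT_shift _ _ T _ _ _ _ km dz) eT /d eqxx eq_sym (negbTE km) eqxx hm.
  move: hk; rewrite /sk /sm; case: (k \in S); case: (k \in T) => // _;
    case: (m \in S); lra.
Qed.

Lemma epsTC (R : realType) (n : nat) (X : {set 'I_n}) (a : 'I_n -> R) :
  epsT (~: X) a = - epsT X a.
Proof. by rewrite /epsT finset.setCK opprB. Qed.

Lemma epsT_cont (R : realType) (n : nat) (T : {set 'I_n}) :
  continuous (fun b : weight R n => epsT T (alpha b)).
Proof.
have E : (fun b : weight R n => epsT T (alpha b)) =
   (fun b => \sum_(i <- index_enum 'I_n) (if i \in T then alpha b i else - alpha b i)).
  by apply: funext => b; rewrite epsTE.
rewrite E.
have ca : forall i, continuous (fun b : weight R n => alpha b i).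
  move=> i b; rewrite /alpha.
  apply: continuousB.
    apply: (@continuous_comp _ _ _ (@snd _ _) (fun M : 'rV[R]_n => M 0 i)).
      exact: cvg_snd.
    exact: coord_continuous.
  apply: (@continuous_comp _ _ _ (@fst _ _) (fun M : 'rV[R]_n => M 0 i)).
    exact: cvg_fst.
  exact: coord_continuous.
elim: (index_enum 'I_n) => [|j r IH] b.
  under eq_fun do rewrite big_nil.
  exact: cst_continuous.
under eq_fun do rewrite big_cons.
apply: continuousD; last exact: IH.
case: (j \in T); first exact: ca.
apply: continuousN; exact: ca.
Qed.

Lemma closure_le (R : realType) (n : nat) (T : {set 'I_n}) (D : set (weight R n)) p :
  (forall b, D b -> epsT T (alpha b) <= 0) -> closure D p -> epsT T (alpha p) <= 0.
Proof.
move=> HD cl.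
set f := (fun b : weight R n => epsT T (alpha b)).
rewrite leNgt; apply/negP => fp.
have := cl (f @^-1` [set y | 0 < y]).
have : nbhs p (f @^-1` [set y | 0 < y]).
  have Hg : nbhs (f p) [set y : R | 0 < y].
    by apply: open_nbhs_nbhs; split => //; exact: open_gt.
  exact: (@epsT_cont R n T p _ Hg).
move=> Hn /(_ Hn) [b [/HD Hb /= Hb2]].
by move: (le_lt_trans Hb Hb2); rewrite ltxx.
Qed.

Theorem mainTheorem5 (R : realType) (n : nat) (p : weight R n)
  (W : set (weight R n)) (S : {set 'I_n})
  (Dp Dm : set (weight R n)) (E : PHB R n) :
  Qspace R n p ->
  is_wall W -> W p ->
  (forall W', is_wall W' -> W' p -> W' = W) ->
  W = wall_of R S ->
  is_chamber Dp -> is_chamber Dm -> Dp <> Dm ->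
  closure Dp p -> closure Dm p ->
  (exists2 U, nbhs p U &
     forall D, is_chamber D -> D `&` U !=set0 -> D = Dp \/ D = Dm) ->
  (forall b, Dp b -> 0 < epsT S (alpha b)) ->
  PHB_wf E ->
  chamber_stable Dm E -> ~ chamber_stable Dp E ->
  forall L, destabilizing Dm Dp E L -> SL E L = S.

Proof.
move=> Qp wW Wp Wuniq WS chP chM PM clP clM _ HP wf stM nstP L [Lline [Linv [HM HP']]].
set T := SL E L.
have e1 : epsT T (alpha p) <= 0.
  by apply: (@closure_le R n T Dm p _ clM) => b /HM /ltW.
have e2 : epsT (~: T) (alpha p) <= 0.
  apply: (@closure_le R n (~: T) Dp p _ clP) => b /HP'; rewrite epsTC oppr_le0 leNgt.
  by move/negP.
rewrite epsTC oppr_le0 in e2.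
have eT : epsT T (alpha p) = 0 by apply/eqP; rewrite eq_le e1 e2.
have wT : wall_of R T = W.
  apply: Wuniq; last by split.
  split; first by exists p.
  by exists T.
have eS : epsT S (alpha p) = 0 by move: Wp; rewrite WS => -[].
have [//|TS] := eqVneq T S.
have [TSc|TSc] := eqVneq T (~: S).
  case: chP => b b1 b2.
  have Db : Dp b by rewrite b2; exact: connected_component_refl.
  have := HP _ Db; have := HP' _ Db; rewrite -/T TSc epsTC oppr_lt0 => h1 h2.
  by case: h1.
have [q [Qq [qS qT]]] := @perturb R n p S T Qp eS eT TS TSc.
have : wall_of R S q by split.
by rewrite -WS -wT => -[].
Qed.
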